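(* Let $p$ be an odd prime, $\xi$ a primitive $p$th root of unity, and $n\in\mathbb Z$ such that $\mathbb Z[1/n][\xi]$ and $\mathbb Z[1/n][\xi+\xi^{-1}]$ are principal ideal domains and $p\mid n$. Let $P$ be a subgroup of order $p$ in $\mathrm{Sp}(p-1,\mathbb Z[1/n])$ with normalizer $N(P)$ and centralizer $C(P)$. Then the action of $N(P)/C(P)$ on $C(P)$ (by conjugation) is given by the action of the Galois group $\mathrm{Gal}(\mathbb Q(\xi)/\mathbb Q)$ on the unit group $\mathbb Z[1/n][\xi]^*$. Moreover $N(P)/C(P)$ acts faithfully on $C(P)$.
   Context: $\mathrm{Sp}(2m,R)=\{M\in\mathrm{GL}(2m,R): M^{\mathrm T}JM=J\}$ with $J=\begin{pmatrix}0&I_m\\-I_m&0\end{pmatrix}$; normalizer and centralizer are taken in $\mathrm{Sp}(p-1,\mathbb Z[1/n])$. *)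

(* Defs.v *)
From mathcomp Require Import all_boot all_order all_algebra all_field.
Set Implicit Arguments. Unset Strict Implicit. Unset Printing Implicit Defensive.
Import Order.TTheory GRing.Theory Num.Theory.
Local Open Scope ring_scope.

(* Z[1/n] as a subset of Q: q such that q * n^k is an integer for some k. *)
Definition Zinv (n : int) (q : rat) : Prop :=
  exists k : nat, (q * (n%:~R) ^+ k) \is a Num.int.

(* The ring Z[1/n][a] inside algC: polynomial expressions in a with
   coefficients in Z[1/n]. *)
Definition Zinv_adj (n : int) (a : algC) (x : algC) : Prop :=
  exists s : seq rat, (forall i : nat, (i < size s)%N -> Zinv n s`_i) /\
    x = \sum_(i < size s) ratr s`_i * a ^+ i.

Definition ideal_in (S I : algC -> Prop) : Prop :=
  (forall x, I x -> S x) /\ I 0 /\ (forall x y, I x -> I y -> I (x + y)) /\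
  (forall r x, S r -> I x -> I (r * x)).

Definition is_PID (S : algC -> Prop) : Prop :=
  forall I, ideal_in S I ->
    exists a, S a /\ forall x, I x <-> exists r, S r /\ x = r * a.

Definition unit_in (S : algC -> Prop) (x : algC) : Prop :=
  S x /\ x != 0 /\ S x^-1.

Definition Jmat (m : nat) : 'M[rat]_(m + m) := block_mx 0 1%:M (- 1%:M) 0.

Definition in_Sp (m : nat) (n : int) (M : 'M[rat]_(m + m)) : Prop :=
  (forall i j, Zinv n (M i j)) /\ M^T *m Jmat m *m M = Jmat m.

Definition subgroup_of_order (m : nat) (n : int) (P : seq 'M[rat]_(m + m))
    (k : nat) : Prop :=
  uniq P /\ size P = k /\ (forall x, x \in P -> in_Sp n x) /\
  1%:M \in P /\
  (forall x y, x \in P -> y \in P -> x *m y \in P) /\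
  (forall x, x \in P -> invmx x \in P).

Definition normalizer (m : nat) (n : int) (P : seq 'M[rat]_(m + m))
    (g : 'M[rat]_(m + m)) : Prop :=
  in_Sp n g /\ forall x, (x \in P) = (g *m x *m invmx g \in P).

Definition centralizer (m : nat) (n : int) (P : seq 'M[rat]_(m + m))
    (g : 'M[rat]_(m + m)) : Prop :=
  in_Sp n g /\ forall x, x \in P -> g *m x = x *m g.

Definition hdim (p : nat) : nat := (p.-1)./2.

(* Main.v *)
Require Import Defs.
From mathcomp Require Import all_boot all_order all_algebra all_field.
From mathcomp Require Import all_fingroup all_solvable zify.
Import Order.TTheory GRing.Theory Num.Theory.
Local Open Scope ring_scope.

Section ZinvLemmas.
Variable n : int.

Lemma Zinv_int (z : int) : Zinv n z%:~R.
Proof. by exists 0%N; rewrite expr0 mulr1 intr_int. Qed.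

Lemma Zinv0 : Zinv n 0. Proof. exact: (Zinv_int 0). Qed.
Lemma Zinv1 : Zinv n 1. Proof. exact: (Zinv_int 1). Qed.

Lemma ZinvD a b : Zinv n a -> Zinv n b -> Zinv n (a + b).
Proof.
move=> [k1 H1] [k2 H2]; exists (k1 + k2)%N.
have Hn : forall k, (n%:~R : rat) ^+ k \is a Num.int by move=> k; apply: rpredX; apply: intr_int.
rewrite mulrDl exprD !mulrA [X in _ + X]mulrAC.
by apply: rpredD; apply: rpredM.
Qed.

Lemma ZinvM a b : Zinv n a -> Zinv n b -> Zinv n (a * b).
Proof.
move=> [k1 H1] [k2 H2]; exists (k1 + k2)%N.
by rewrite exprD mulrACA; apply: rpredM.
Qed.

Lemma ZinvN a : Zinv n a -> Zinv n (- a).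
Proof. by move=> [k H]; exists k; rewrite mulNr rpredN. Qed.

Lemma Zinv_sum I (r : seq I) (P : pred I) (F : I -> rat) :
  (forall i, P i -> Zinv n (F i)) -> Zinv n (\sum_(i <- r | P i) F i).
Proof.
move=> H; apply: (big_ind (Zinv n)) => //; [exact: Zinv0 | exact: ZinvD].
Qed.

Lemma Zinv_invp (p : nat) : (0 < p)%N -> (p%:Z %| n)%Z -> Zinv n (p%:R)^-1.
Proof.
move=> p0 /dvdzP [q ->]; exists 1%N; rewrite expr1 rmorphM /= mulrCA.
rewrite -[p%:Z%:~R]/(p%:R : rat) mulVf ?mulr1 ?intr_int //.
by rewrite pnatr_eq0 -lt0n.
Qed.

Definition mxZinv {m1 m2} (A : 'M[rat]_(m1, m2)) := forall i j, Zinv n (A i j).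

Lemma mxZinvM m1 m2 m3 (A : 'M[rat]_(m1, m2)) (B : 'M[rat]_(m2, m3)) :
  mxZinv A -> mxZinv B -> mxZinv (A *m B).
Proof.
move=> HA HB i j; rewrite mxE; apply: Zinv_sum => k _; exact: ZinvM.
Qed.

Lemma mxZinv1 m1 : mxZinv (1%:M : 'M[rat]_m1).
Proof. move=> i j; rewrite mxE; case: (i == j); [exact: Zinv1| exact: Zinv0]. Qed.

Lemma mxZinv_tr m1 (A : 'M[rat]_m1) : mxZinv A -> Zinv n (\tr A).
Proof. by move=> HA; apply: Zinv_sum => i _. Qed.

End ZinvLemmas.

Definition fixk (p k : nat) : nat := if coprime k p then k else 1%N.
Lemma fixk_cop p k : coprime (fixk p k) p.
Proof. by rewrite /fixk; case: ifP => // _; exact: coprime1n. Qed.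
Definition sig (p k : nat) : {rmorphism algC -> algC} :=
  if k == 1%N then (idfun : {rmorphism algC -> algC}) else sval (Qn_aut_exists (fixk_cop p k)).
Lemma sig1 p z : sig p 1 z = z.
Proof. by []. Qed.
Lemma sigE p k z : coprime k p -> z ^+ p = 1 -> sig p k z = z ^+ k.
Proof.
move=> ck zp; rewrite /sig; case: eqP => [-> |_]; first by rewrite expr1.
case: (Qn_aut_exists _) => u /= -> //.
by rewrite /fixk ck.
Qed.
Lemma sig_rat p k q : sig p k (ratr q) = ratr q.
Proof. exact: fmorph_rat. Qed.


Section Main.
Variable m : nat.
Local Notation p := m.+2.
Local Notation N := m.+1.
Local Notation R := 'M[rat]_(m.+1).
Hypothesis p_prime : prime p.
Variable n : int.
Hypothesis p_dvd_n : (p%:Z %| n)%Z.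
Variable xi : algC.
Hypothesis xi_prim : p.-primitive_root xi.
Variable S : R -> Prop.
Hypothesis S_unit : forall {y}, S y -> y \is a GRing.unit.
Hypothesis S_inv : forall {y}, S y -> S (y^-1).
Hypothesis S_Zinv : forall {y}, S y -> mxZinv n y.
Variable P : seq R.
Hypothesis P_uniq : uniq P.
Hypothesis P_size : size P = p.
Hypothesis P_S : forall {y}, y \in P -> S y.
Hypothesis P_1 : 1 \in P.
Hypothesis P_mul : forall {y z}, y \in P -> z \in P -> y * z \in P.
Variable x : R.
Hypothesis xP : x \in P.
Hypothesis x1 : x != 1.

Lemma P_unit {y} : y \in P -> y \is a GRing.unit.
Proof. by move=> /P_S /S_unit. Qed.

Local Definition T := seq_sub P.

Definition rmf (y : T) (z : T) : T := SeqSub (P_mul (ssvalP z) (ssvalP y)).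

Lemma rmf_inj y : injective (rmf y).
Proof.
move=> z1 z2 /(congr1 val) /= /(mulIr (P_unit (ssvalP y))) H.
by apply: val_inj.
Qed.

Definition rm (y : T) : {perm T} := perm (rmf_inj y).

Definition one : T := SeqSub P_1.

Lemma rmE y z : val (rm y z) = val z * val y.
Proof. by rewrite permE. Qed.

Lemma rm_inj : injective rm.
Proof.
move=> y1 y2 H; apply: val_inj.
move: (congr1 (fun s : {perm T} => val (s one)) H); by rewrite /= !rmE /= !mul1r.
Qed.

Lemma rmM y z : (rm y * rm z)%g = rm (SeqSub (P_mul (ssvalP y) (ssvalP z))).
Proof.
apply/permP => w; apply: val_inj; by rewrite permM !rmE /= mulrA.
Qed.

Definition G : {set {perm T}} := [set rm y | y : T].

Lemma G_group : group_set G.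
Proof.
apply/andP; split.
  apply/imsetP; exists one => //; apply/permP => w; apply: val_inj.
  by rewrite perm1 rmE mulr1.
apply/subsetP => s /mulsgP [a b /imsetP [y _ ->] /imsetP [z _ ->] ->].
by rewrite rmM; apply: imset_f.
Qed.

Definition GG := Group G_group.

Lemma card_G : #|G| = p.
Proof.
rewrite card_imset; last exact: rm_inj.
by rewrite card_seq_sub // P_size.
Qed.



Lemma pow_in k : x ^+ k \in P.
Proof. elim: k => [|k IH]; first by rewrite expr0. by rewrite exprSr P_mul. Qed.

Local Definition Xs : T := SeqSub xP.

Lemma rm_val (a b : T) : val a = val b -> rm a = rm b.
Proof. by move/val_inj ->. Qed.

Lemma rmX k : (rm Xs ^+ k)%g = rm (SeqSub (pow_in k)).
Proof.
elim: k => [|k IH].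
  apply/permP => w; apply: val_inj; by rewrite perm1 rmE /= expr0 mulr1.
by rewrite expgSr IH rmM; apply: rm_val; rewrite /= exprSr.
Qed.

Lemma order_X : #[rm Xs]%g = p.
Proof.
have : (#[rm Xs]%g %| #|GG|)%N by apply: order_dvdG; apply: imset_f.
rewrite card_G; apply/prime_nt_dvdP => //; rewrite order_eq1.
apply/eqP => H.
have : rm Xs = rm one.
  rewrite H; apply/permP => w; apply: val_inj; by rewrite perm1 rmE /= mulr1.
by move/rm_inj/(congr1 val) => /= /eqP; rewrite (negbTE x1).
Qed.

Lemma eq_pow a b : (x ^+ a == x ^+ b) = (a == b %[mod p])%N.
Proof.
rewrite -order_X -eq_expg_mod_order !rmX; apply/eqP/eqP => [H|H].
  by apply: rm_val.
by move/rm_inj/(congr1 val): H.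
Qed.

Lemma xp : x ^+ p = 1.
Proof. by apply/eqP; rewrite -(expr0 x) eq_pow modnn mod0n. Qed.

Lemma P_pow y : y \in P -> exists2 k, (k < p)%N & y = x ^+ k.
Proof.
move=> yP.
have HG : <[rm Xs]>%g = GG.
  apply/eqP; rewrite eqEcard cycle_subG /=; apply/andP; split.
    exact: imset_f.
  by rewrite card_G -orderE order_X.
have : rm (SeqSub yP) \in <[rm Xs]>%g by rewrite HG; apply: imset_f.
case/cycleP => i Hi.
exists (i %% p)%N; first by rewrite ltn_mod.
move: Hi; rewrite rmX => /rm_inj/(congr1 val) /= ->.
by apply/eqP; rewrite eq_pow modn_mod.
Qed.


Definition toC (A : 'M[rat]_N) : 'M[algC]_N := map_mx ratr A.

Lemma sig_toC k A : map_mx (sig p k) (toC A) = toC A.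
Proof. by rewrite /toC -map_mx_comp; apply: eq_map_mx => q /=; rewrite sig_rat. Qed.

Lemma toCM A B : toC (A * B) = toC A * toC B.
Proof. exact: map_mxM. Qed.
Lemma toC1 : toC 1 = 1.
Proof. exact: map_mx1. Qed.
Lemma toCX A k : toC (A ^+ k) = toC A ^+ k.
Proof. elim: k => [|k IH]; first by rewrite !expr0 toC1. by rewrite !exprS toCM IH. Qed.
Lemma toC_inj : injective toC.
Proof. exact: map_mx_inj. Qed.

Lemma xip : xi ^+ p = 1. Proof. exact: prim_expr_order. Qed.
Lemma xikp k : (xi ^+ k) ^+ p = 1. Proof. by rewrite -exprM mulnC exprM xip expr1n. Qed.

Lemma cop_ord (i : 'I_N) : coprime i.+1 p.
Proof.
rewrite coprime_sym prime_coprime //; apply/negP => /dvdn_leq.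
by move=> H; have := H (ltn0Sn _); have := ltn_ord i; lia.
Qed.


Local Notation X := (toC x).

Definition E (i : 'I_N) := eigenspace X (xi ^+ i.+1).

Lemma sig_xi k j : coprime k p -> sig p k (xi ^+ j) = xi ^+ (j * k).
Proof. by move=> ck; rewrite sigE ?xikp // exprM. Qed.

Lemma notunit1 : ~~ (X - xi%:M \in unitmx).
Proof.
apply/negP => U.
have Uk : forall k : nat, (0 < k < p)%N -> X - (xi ^+ k)%:M \in unitmx.
  move=> k /andP [k0 kp].
  have ck : coprime k p.
    rewrite coprime_sym prime_coprime //; apply/negP => /(dvdn_leq k0).
    by rewrite leqNgt kp.
  have -> : X - (xi ^+ k)%:M = map_mx (sig p k) (X - xi%:M).
    by rewrite map_mxB map_scalar_mx sig_toC -(expr1 xi) sig_xi // mul1n expr1.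
  by rewrite map_unitmx.
have H : \prod_(0 <= i < p) (X - (xi ^+ i)%:M) = 0.
  have := congr1 (horner_mx X) (factor_Xn_sub_1 xi_prim).
  rewrite rmorph_prod /= rmorphB rmorphXn /= horner_mx_X rmorph1 -toCX xp toC1 subrr.
  move=> <-; apply: eq_bigr => i _; by rewrite rmorphB /= horner_mx_X horner_mx_C.
have Up : \prod_(1 <= i < p) (X - (xi ^+ i)%:M) \in unitmx.
  rewrite big_nat; apply: (big_ind (fun M => M \in unitmx)).
  - by rewrite unitmx1.
  - by move=> A B ha hb; rewrite -mulmxE unitmx_mul ha hb.
  - by move=> i /Uk.
move: H; rewrite big_ltn // expr0 => /(congr1 (fun M => M / (\prod_(1 <= i < p) (X - (xi ^+ i)%:M)))).
rewrite mul0r mulrK // => /eqP; rewrite subr_eq0 idmxE -toC1 => /eqP /toC_inj.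
by move/eqP; rewrite (negbTE x1).
Qed.


Lemma E_map i : E i = map_mx (sig p i.+1) (E ord0).
Proof.
rewrite /E /eigenspace map_kermx map_mxB map_scalar_mx sig_toC sig_xi ?cop_ord //.
by rewrite mul1n.
Qed.

Lemma E0_neq0 : E ord0 != 0.
Proof.
rewrite /E /eigenspace expr1 kermx_eq0 row_free_unit; exact: notunit1.
Qed.

Lemma rankE_pos i : (0 < \rank (E i))%N.
Proof. by rewrite E_map mxrank_map lt0n mxrank_eq0 E0_neq0. Qed.

Lemma Edirect : mxdirect (\sum_i E i).
Proof.
apply: mxdirect_sum_eigenspace => i j _ _ /eqP.
rewrite (eq_prim_root_expr xi_prim) !modn_small ?ltnS ?ltn_ord //.
  by move=> /eqP [] /val_inj.
by rewrite -ltnS ltn_ord.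
by rewrite -ltnS ltn_ord.
Qed.

Lemma sum_rank : \rank (\sum_i E i) = (\sum_i \rank (E i))%N.
Proof. by have := Edirect; rewrite mxdirectE => /eqP. Qed.

Lemma rankE i : \rank (E i) = 1%N.
Proof.
have Hle : (\sum_(j < N) \rank (E j) <= N)%N by rewrite -sum_rank rank_leq_col.
have Hs : (\sum_(j < N) \rank (E j) = \sum_(j < N) 1 + \sum_(j < N) (\rank (E j)).-1)%N.
  rewrite -big_split /=; apply: eq_bigr => j _.
  by rewrite add1n prednK // rankE_pos.
move: Hle; rewrite Hs sum_nat_const card_ord muln1 -[X in (_ <= X)%N](addn0 N) leq_add2l leqn0.
rewrite sum_nat_eq0 => /forallP /(_ i) /eqP.
by have := rankE_pos i; case: (\rank (E i)) => [|[|]].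
Qed.

Lemma Efull : row_full (\sum_i E i).
Proof.
rewrite /row_full sum_rank (eq_bigr (fun _ => 1%N)) => [|j _]; last exact: rankE.
by rewrite sum_nat_const card_ord muln1.
Qed.


Definition lam (u w : 'rV[algC]_N) : algC :=
  match [pick j | u 0 j != 0] with Some j => w 0 j / u 0 j | None => 0 end.

Lemma lamE u a : u != 0 -> lam u (a *: u) = a.
Proof.
move=> u0; rewrite /lam; case: pickP => [j uj|H].
  by rewrite mxE mulfK.
by case/eqP: u0; apply/matrixP => i j; rewrite ord1 mxE; move/negbFE: (H j) => /eqP.
Qed.

Lemma E_line i (u w : 'rV[algC]_N) : (u <= E i)%MS -> u != 0 -> (w <= E i)%MS -> exists a, w = a *: u.
Proof.
move=> uE u0 wE; apply/sub_rVP; apply: submx_trans wE _.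
by rewrite -(mxrank_leqif_sup uE).2 rankE rank_rV u0.
Qed.

Definition v (i : 'I_N) : 'rV[algC]_N := nz_row (E i).

Lemma v_sub i : (v i <= E i)%MS. Proof. exact: nz_row_sub. Qed.
Lemma v_neq0 i : v i != 0.
Proof. by rewrite nz_row_eq0 -mxrank_eq0 rankE. Qed.
Lemma vX i : v i *m X = xi ^+ i.+1 *: v i.
Proof. exact/eigenspaceP/v_sub. Qed.

Lemma E_stable i (C : 'M[algC]_N) m1 (w : 'M_(m1, N)) : X *m C = C *m X -> (w <= E i)%MS -> (w *m C <= E i)%MS.
Proof.
move=> XC /eigenspaceP wX; apply/eigenspaceP.
by rewrite -mulmxA -XC mulmxA wX scalemxAl.
Qed.

Lemma vC (i : 'I_N) (C : 'M[algC]_N) : X *m C = C *m X -> v i *m C = lam (v i) (v i *m C) *: v i.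
Proof.
move=> XC; have [a Ha] := @E_line i _ _ (v_sub i) (v_neq0 i) (@E_stable i C _ _ XC (v_sub i)).
by rewrite Ha lamE // v_neq0.
Qed.

Definition B : 'M[algC]_N := \matrix_(i < N) v i.

Lemma B_unit : B \in unitmx.
Proof.
rewrite -row_full_unit -sub1mx; apply: submx_trans _; first by rewrite sub1mx; exact: Efull.
apply/sumsmx_subP => i _; apply: submx_trans (row_sub i B); rewrite rowK.
by rewrite -(mxrank_leqif_sup (v_sub i)).2 rankE rank_rV v_neq0.
Qed.

Definition lams (C : 'M[algC]_N) : 'rV[algC]_N := \row_i lam (v i) (v i *m C).

Lemma B_diag {C} : X *m C = C *m X -> B *m C = diag_mx (lams C) *m B.
Proof.
move=> XC; apply/row_matrixP => i.
rewrite row_mul rowK row_mul row_diag_mx -scalemxAl -rowE rowK (vC i C XC).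
by rewrite mxE.
Qed.

Lemma C_eq {C} : X *m C = C *m X -> C = invmx B *m diag_mx (lams C) *m B.
Proof. by move/B_diag => H; rewrite -mulmxA -H mulmxA mulVmx ?mul1mx // B_unit. Qed.

Lemma C_inj C D : X *m C = C *m X -> X *m D = D *m X -> lams C = lams D -> C = D.
Proof. by move=> HC HD H; rewrite (C_eq HC) (C_eq HD) H. Qed.

Lemma tr_C {C} : X *m C = C *m X -> \tr C = \sum_i lam (v i) (v i *m C).
Proof.
move=> HC; rewrite {1}(C_eq HC) mxtrace_mulC mulmxA mulmxV ?B_unit // mul1mx mxtrace_diag.
by apply: eq_bigr => i _; rewrite mxE.
Qed.


Definition phi (c : 'M[rat]_N) : algC := lam (v ord0) (v ord0 *m toC c).

Lemma comm_toC c : x * c = c * x -> X *m toC c = toC c *m X.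
Proof. by move=> H; rewrite !mulmxE -!toCM H. Qed.

Lemma sigv_sub (i : 'I_N) : (map_mx (sig p i.+1) (v ord0) <= E i)%MS.
Proof. by rewrite E_map map_submx v_sub. Qed.
Lemma sigv_neq0 (i : 'I_N) : map_mx (sig p i.+1) (v ord0) != 0.
Proof. by rewrite map_mx_eq0 v_neq0. Qed.

Lemma v0C c : x * c = c * x -> v ord0 *m toC c = phi c *: v ord0.
Proof. move/comm_toC => H; exact: (vC ord0 (toC c) H). Qed.

Lemma lam_sig (i : 'I_N) c : x * c = c * x -> lam (v i) (v i *m toC c) = sig p i.+1 (phi c).
Proof.
move=> H; set w := map_mx (sig p i.+1) (v ord0).
have wC : w *m toC c = sig p i.+1 (phi c) *: w.
  by rewrite /w -{1}(sig_toC i.+1 c) -map_mxM v0C // map_mxZ.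
have [b Hb] := @E_line i _ _ (sigv_sub i) (sigv_neq0 i) (v_sub i).
by rewrite Hb -scalemxAl wC scalerA mulrC -scalerA -Hb lamE // v_neq0.
Qed.

Lemma phi_mul c d : x * c = c * x -> x * d = d * x -> phi (c * d) = phi c * phi d.
Proof.
move=> Hc Hd; rewrite /phi toCM -mulmxE mulmxA v0C // -scalemxAl v0C // scalerA.
by rewrite !lamE // v_neq0.
Qed.

Lemma phi1 : phi 1 = 1.
Proof. by rewrite /phi toC1 -idmxE mulmx1 -[X in lam _ X](scale1r (v ord0)) lamE // v_neq0. Qed.

Lemma phi_inj c d : x * c = c * x -> x * d = d * x -> phi c = phi d -> c = d.
Proof.
move=> Hc Hd H; apply: toC_inj; apply: C_inj; try exact: comm_toC.
by apply/rowP => i; rewrite !mxE !lam_sig // H.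
Qed.

Lemma vXk (i : 'I_N) k : v i *m X ^+ k = xi ^+ (i.+1 * k) *: v i.
Proof.
elim: k => [|k IH]; first by rewrite expr0 muln0 expr0 scale1r -(idmxE _ N) mulmx1.
by rewrite exprSr -mulmxE mulmxA IH -scalemxAl vX scalerA -exprD mulnS addnC.
Qed.

Lemma sum_geo (z : algC) : z ^+ p = 1 -> z != 1 -> \sum_(j < p) z ^+ j = 0.
Proof.
move=> zp z1; have := subrX1 z p; rewrite zp subrr => /esym /eqP.
by rewrite mulf_eq0 subr_eq0 (negbTE z1) => /eqP.
Qed.

Lemma trace_formula c : x * c = c * x ->
  p%:R * phi c = \sum_(j < p) ratr (\tr (c * x ^+ (N * j))) * xi ^+ j.
Proof.
move=> Hc.
have Ht : forall j, ratr (\tr (c * x ^+ (N * j))) =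
    \sum_(i < N) sig p i.+1 (phi c) * xi ^+ (i.+1 * (N * j)) :> algC.
  move=> j; rewrite -trace_map_mx -/(toC _) toCM toCX.
  have HC : X *m (toC c * X ^+ (N * j)) = (toC c * X ^+ (N * j)) *m X.
    rewrite !mulmxE mulrA -!mulmxE comm_toC // !mulmxE -mulrA -[RHS]mulrA; congr (_ * _); by rewrite -exprS -exprSr.
  rewrite (tr_C HC); apply: eq_bigr => i _.
  rewrite -mulmxE mulmxA (vC i (toC c)) ?comm_toC // lam_sig //.
  by rewrite -scalemxAl vXk scalerA lamE // v_neq0.
under eq_bigr => j _ do rewrite Ht mulr_suml.
under eq_bigr => j _ do under eq_bigr => i _ do rewrite -mulrA.
rewrite exchange_big /= big_ord_recl /= [X in _ + X]big1 ?addr0.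
  rewrite -mulr_sumr (eq_bigr (fun j : 'I_p => 1)) => [|j _].
    by rewrite sumr_const card_ord mulrC.
  by rewrite mul1n -exprD -[X in (_ + X)%N](mul1n j) -mulnDl addn1 exprM xip expr1n.
move=> i _; rewrite -mulr_sumr.
have -> : \sum_(j < p) xi ^+ ((bump 0 i).+1 * (N * j)) * xi ^+ j =
          \sum_(j < p) (xi ^+ ((bump 0 i).+1 * N + 1)) ^+ j.
  by apply: eq_bigr => j _; rewrite -exprD -exprM mulnA mulnDl mul1n.
rewrite sum_geo ?mulr0 //; first by rewrite -exprM mulnC exprM xip expr1n.
rewrite -(expr0 xi) (eq_prim_root_expr xi_prim) mod0n; apply/negP => /eqP H0.
have H : (p %| (bump 0 i).+1 * N + 1)%N by apply/eqP.
have H2 : (p %| (bump 0 i).+1 * N + 1 + bump 0 i)%N.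
  by rewrite -addnA add1n -mulnSr dvdn_mull.
rewrite dvdn_addr // in H2.
have := dvdn_leq _ H2; rewrite /bump /= add1n => /(_ (ltn0Sn _)).
have := ltn_ord i; lia.
Qed.


Lemma phi_conj g c k k' : g \is a GRing.unit -> x * c = c * x ->
  g^-1 * x = x ^+ k' * g^-1 -> coprime k p -> (k * k' == 1 %[mod p])%N ->
  phi (g * c * g^-1) = sig p k (phi c).
Proof.
move=> gU Hc Hk ck Hkk.
set w := map_mx (sig p k) (v ord0).
have w0 : w != 0 by rewrite map_mx_eq0 v_neq0.
have wC : w *m toC c = sig p k (phi c) *: w.
  by rewrite /w -{1}(sig_toC k c) -map_mxM v0C // map_mxZ.
have wX : w *m X ^+ k' = xi ^+ (k * k') *: w.
  rewrite /w -toCX -(sig_toC k (x ^+ k')) -map_mxM toCX vXk map_mxZ mul1n sig_xi //.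
  by rewrite mulnC.
have GU : toC (g^-1) \in unitmx by rewrite map_unitmx; move: gU; rewrite -unitrV.
set u := w *m toC (g^-1).
have u0 : u != 0.
  apply/negP => /eqP H; move/negP: w0; apply; apply/eqP.
  by rewrite -[w](mulmxK GU) -/u H mul0mx.
have uE : (u <= E ord0)%MS.
  apply/eigenspaceP; rewrite /u -mulmxA mulmxE -toCM Hk toCM toCX -mulmxE mulmxA.
  rewrite wX -scalemxAl; congr (_ *: _).
  by apply/eqP; rewrite (eq_prim_root_expr xi_prim).
have uC : u *m toC (g * c * g^-1) = sig p k (phi c) *: u.
  rewrite /u !toCM -!mulmxE !mulmxA -[w *m _ *m _]mulmxA.
  rewrite mulmxE -toCM mulVr // toC1 -(idmxE _ N) mulmx1 wC scalemxAl //.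
have [b Hb] := @E_line ord0 _ _ uE u0 (v_sub ord0).
by rewrite /phi Hb -scalemxAl uC scalerA mulrC -scalerA -Hb lamE // v_neq0.
Qed.


Definition centS (c : R) := S c /\ forall y, y \in P -> c *m y = y *m c.
Definition normS (g : R) := S g /\ forall y, (y \in P) = (g *m y *m invmx g \in P).

Lemma comm_P (c : R) : c * x = x * c -> forall y, y \in P -> c *m y = y *m c.
Proof.
move=> H y /P_pow [k _ ->]; rewrite !mulmxE.
exact: commrX k H.
Qed.

Lemma x_cent : centS x.
Proof.
split; first exact: P_S.
by apply: comm_P.
Qed.

Lemma cent_comm {c} : centS c -> x * c = c * x.
Proof. by case=> _ /(_ x xP); rewrite !mulmxE. Qed.

Lemma conjX (g : R) k : g \is a GRing.unit -> (g * x * g^-1) ^+ k = g * x ^+ k * g^-1.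
Proof.
move=> gU; elim: k => [|k IH]; first by rewrite !expr0 mulr1 divrr.
by rewrite exprS IH !mulrA mulrVK // -(mulrA g x) -exprS.
Qed.

Definition kk (g : R) : nat := find (fun k => g * x * g^-1 == x ^+ k) (iota 0 p).

Lemma kk_spec {g k} : g * x * g^-1 = x ^+ k -> (kk g < p)%N /\ g * x * g^-1 = x ^+ kk g.
Proof.
move=> H.
have Hh : has (fun k => g * x * g^-1 == x ^+ k) (iota 0 p).
  apply/hasP; exists (k %% p)%N; first by rewrite mem_iota add0n ltn_mod.
  by rewrite H; apply/eqP/eqP; rewrite eq_pow modn_mod.
split; first by move: Hh; rewrite has_find size_iota.
have := nth_find 0%N Hh; rewrite nth_iota ?add0n => [/eqP //|].
by move: Hh; rewrite has_find size_iota.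
Qed.

Lemma xpow_xi {a b} : x ^+ a = x ^+ b -> xi ^+ a = xi ^+ b.
Proof.
by move/eqP; rewrite eq_pow => H; apply/eqP; rewrite (eq_prim_root_expr xi_prim).
Qed.

Lemma norm_data {g} : normS g ->
  [/\ g \is a GRing.unit, g * x * g^-1 = x ^+ kk g, coprime (kk g) p &
      exists k', g^-1 * x = x ^+ k' * g^-1 /\ (kk g * k' == 1 %[mod p])%N].
Proof.
case=> Sg Hn; have gU := S_unit Sg.
have : g * x * g^-1 \in P by move: (Hn x); rewrite xP !mulmxE => <-.
case/P_pow => k _ /kk_spec [kp Hk].
have Hk' : g^-1 * x * g \in P.
  by rewrite Hn !mulmxE !mulrA mulrV // mul1r mulrK.
case/P_pow: Hk' => k' _ Hk'.
split => //.
- rewrite coprime_sym prime_coprime //; apply/negP => Hd.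
  have k0 : kk g = 0%N.
    by case: (posnP (kk g)) => // /dvdn_leq /(_ Hd) H; have := kp; lia.
  move: Hk; rewrite k0 expr0 => /(congr1 (fun y => y * g)); rewrite mulrVK // mul1r.
  rewrite -{2}[g]mulr1 => /(mulrI gU) H; by move: x1; rewrite H eqxx.
- exists k'; split.
    by rewrite -Hk' mulrK.
  rewrite -eq_pow expr1 exprM -Hk conjX // -Hk' !mulrA mulrV // mul1r mulrK //.
Qed.

Lemma eval_adj (f : {rmorphism algC -> algC}) (s : seq rat) :
  f (\sum_(i < size s) ratr s`_i * xi ^+ i) = \sum_(i < size s) ratr s`_i * (f xi) ^+ i.
Proof.
rewrite rmorph_sum; apply: eq_bigr => i _; by rewrite rmorphM rmorphXn /= fmorph_rat.
Qed.

Lemma xi_adj : Zinv_adj n xi xi.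
Proof.
exists [:: 0; 1]; split.
  by case=> [|[|]] //= _; [exact: Zinv0 | exact: Zinv1].
by rewrite big_ord_recl big_ord1 /= rmorph0 rmorph1 mul0r add0r mul1r expr1.
Qed.

Definition psi (g : R) : {rmorphism algC -> algC} := sig p (kk g).

Lemma psi_xi g : normS g -> psi g xi = xi ^+ kk g.
Proof. by case/norm_data => _ _ ck _; rewrite /psi sigE // xip. Qed.

Lemma psiM g h y : normS g -> normS h -> Zinv_adj n xi y ->
  psi (g *m h) y = psi g (psi h y).
Proof.
move=> Ng Nh [s [_ ->]].
have [gU Hg cg _] := norm_data Ng; have [hU Hh ch _] := norm_data Nh.
rewrite !eval_adj rmorph_sum; apply: eq_bigr => i _; rewrite rmorphM rmorphXn /= fmorph_rat; congr (_ * _ ^+ _).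
have Hgh : (g * h) * x * (g * h)^-1 = x ^+ (kk g * kk h).
  have -> : g * h * x * (g * h)^-1 = g * (h * x * h^-1) * g^-1 by rewrite invrM // !mulrA.
  by rewrite Hh -conjX // Hg exprM.
have [_ Hgh'] := kk_spec Hgh.
rewrite Hgh' in Hgh; rewrite mulmxE.
have cgh : coprime (kk (g * h)) p.
  rewrite -coprime_modl; move/eqP: Hgh; rewrite eq_pow => /eqP ->.
  by rewrite coprime_modl coprimeMl cg ch.
rewrite /psi sigE ?xip // (xpow_xi Hgh) -/(psi h) psi_xi // rmorphXn /=.
by rewrite -/(psi g) psi_xi // -exprM.
Qed.

Lemma psi_ker g : normS g -> (forall y, Zinv_adj n xi y -> psi g y = y) <-> centS g.
Proof.
move=> Ng; have [gU Hg cg _] := norm_data Ng; split.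
- move=> H; have := H xi xi_adj; rewrite psi_xi // -{2}(expr1 xi) => /eqP.
  rewrite (eq_prim_root_expr xi_prim) -eq_pow -Hg expr1 => /eqP Hx.
  split; first by case: Ng.
  apply: comm_P; by rewrite -{2}Hx mulrVK.
- move=> Cg; have Hx : g * x * g^-1 = x ^+ 1 by rewrite expr1 -(cent_comm Cg) -mulrA mulrV ?mulr1.
  have [_ H1] := kk_spec Hx; rewrite H1 in Hx.
  move=> y [s [_ ->]]; rewrite eval_adj; apply: eq_bigr => i _.
  by rewrite psi_xi // (xpow_xi Hx) expr1.
Qed.

Lemma cent_inv {c} : centS c -> centS (invmx c).
Proof.
case=> Sc Hc; split; first exact: S_inv.
move=> y yP; have := Hc y yP; rewrite !mulmxE => H.
have : GRing.comm y c by [].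
by move/commrV.
Qed.

Lemma phi_adj c : centS c -> Zinv_adj n xi (phi c).
Proof.
move=> Cc; have Hc := cent_comm Cc.
exists (mkseq (fun j => \tr (c * x ^+ (N * j)) / p%:R) p); split.
  move=> i; rewrite size_mkseq => ip; rewrite nth_mkseq //.
  apply: ZinvM; last exact: Zinv_invp.
  apply: mxZinv_tr; apply: mxZinvM; first by apply: S_Zinv; case: Cc.
  by apply: S_Zinv; apply: P_S; apply: pow_in.
rewrite size_mkseq.
have Hp : (p%:R : algC) != 0 by rewrite pnatr_eq0.
rewrite -[LHS](mulKf Hp) (trace_formula c Hc) mulr_sumr; apply: eq_bigr => i _.
rewrite nth_mkseq // rmorphM /= fmorphV rmorph_nat mulrA; congr (_ * _).
by rewrite mulrC.
Qed.

Lemma phi_unit c : centS c -> unit_in (Zinv_adj n xi) (phi c).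
Proof.
move=> Cc; have Ci := cent_inv Cc.
have cU : c \is a GRing.unit by apply: S_unit; case: Cc.
have H : phi c * phi (invmx c) = 1.
  rewrite -phi_mul; [|exact: cent_comm Cc|exact: cent_comm Ci].
  by rewrite [c * _]mulrV // phi1.
have c0 : phi c != 0 by apply/negP => /eqP c0; move: H; rewrite c0 mul0r => /eqP; rewrite eq_sym oner_eq0.
split; first exact: phi_adj.
split => //.
have -> : (phi c)^-1 = phi (invmx c) by rewrite -[RHS](mulKf c0) H mulr1.
exact: phi_adj.
Qed.

Lemma core_concl :
  (exists (phi0 : R -> algC) (psi0 : R -> {rmorphism algC -> algC}),
     (forall c, centS c -> unit_in (Zinv_adj n xi) (phi0 c)) /\
     (forall c d, centS c -> centS d -> phi0 (c *m d) = phi0 c * phi0 d) /\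
     (forall c d, centS c -> centS d -> phi0 c = phi0 d -> c = d) /\
     (forall g h y, normS g -> normS h -> Zinv_adj n xi y ->
        psi0 (g *m h) y = psi0 g (psi0 h y)) /\
     (forall g, normS g -> (forall y, Zinv_adj n xi y -> psi0 g y = y) <-> centS g) /\
     (forall g c, normS g -> centS c -> phi0 (g *m c *m invmx g) = psi0 g (phi0 c)))
  /\ (forall g, normS g -> (forall c, centS c -> g *m c *m invmx g = c) -> centS g).
Proof.
split.
  exists phi, psi; split; first exact: phi_unit.
  split; first by move=> c d Cc Cd; apply: phi_mul; apply: cent_comm.
  split; first by move=> c d Cc Cd; apply: phi_inj; apply: cent_comm.
  split; first exact: psiM.
  split; first exact: psi_ker.
  move=> g c Ng Cc; have [gU Hg cg [k' [Hk' Hkk]]] := norm_data Ng.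
  exact: (@phi_conj g c (kk g) k' gU (cent_comm Cc) Hk' cg Hkk).
move=> g Ng H; have [gU _ _ _] := norm_data Ng.
have Hx := H x x_cent.
split; first by case: Ng.
apply: comm_P; move: Hx; rewrite !mulmxE => Hx.
by rewrite -{2}Hx mulrVK.
Qed.


End Main.

Lemma JJ m0 : Jmat m0 *m Jmat m0 = - 1%:M.
Proof.
rewrite /Jmat mulmx_block !mul0mx !mulmx0 !mul1mx !mulmx1 !addr0 !add0r.
by rewrite [1%:M in RHS]scalar_mx_block opp_block_mx !oppr0.
Qed.

Lemma Sp_left {m0 n} {M : 'M[rat]_(m0 + m0)} : in_Sp n M ->
  (- (Jmat m0 *m M^T *m Jmat m0)) *m M = 1%:M.
Proof.
case=> _ H; by rewrite mulNmx -!mulmxA (mulmxA M^T) H JJ opprK.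
Qed.

Lemma Sp_unit {m0 n} {M : 'M[rat]_(m0 + m0)} : in_Sp n M -> M \in unitmx.
Proof. by move/Sp_left/mulmx1_unit => []. Qed.

Lemma Sp_invE {m0 n} {M : 'M[rat]_(m0 + m0)} : in_Sp n M ->
  invmx M = - (Jmat m0 *m M^T *m Jmat m0).
Proof.
move=> H; have U := Sp_unit H.
by rewrite -[RHS]mulmx1 -(mulmxV U) mulmxA (Sp_left H) mul1mx.
Qed.

Lemma mxZinvN n m1 m2 (A : 'M[rat]_(m1, m2)) : mxZinv n A -> mxZinv n (- A).
Proof. by move=> H i j; rewrite mxE; apply: ZinvN. Qed.

Lemma mxZinv0 n m1 m2 : mxZinv n (0 : 'M[rat]_(m1, m2)).
Proof. by move=> i j; rewrite mxE; apply: Zinv0. Qed.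

Lemma mxZinvJ n m0 : mxZinv n (Jmat m0).
Proof.
move=> i j; rewrite /Jmat -[i]splitK -[j]splitK.
case: (split i) => i'; case: (split j) => j' /=.
- by rewrite block_mxEul; apply: mxZinv0.
- by rewrite block_mxEur; apply: mxZinv1.
- by rewrite block_mxEdl; apply: mxZinvN; apply: mxZinv1.
- by rewrite block_mxEdr; apply: mxZinv0.
Qed.

Lemma Sp_inv {m0 n} {M : 'M[rat]_(m0 + m0)} : in_Sp n M -> in_Sp n (invmx M).
Proof.
move=> H; have U := Sp_unit H; split.
  rewrite (Sp_invE H); apply: mxZinvN; apply: mxZinvM; last exact: mxZinvJ.
  apply: mxZinvM; first exact: mxZinvJ.
  by case: H => HM _ i j; rewrite mxE; apply: HM.
case: H => _ H.
by rewrite -{1}H !mulmxA -trmx_mul -(mulmxA _ M) mulmxV // mulmx1 trmx1 mul1mx.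
Qed.

Lemma exists_x {N} {P : seq 'M[rat]_N} {k} : uniq P -> size P = k -> (1 < k)%N ->
  exists2 x, x \in P & x != 1%:M.
Proof.
move=> Pu Ps k1.
case: (boolP (has (fun y => y != 1%:M) P)) => [/hasP [y yP y1] | /hasPn H].
  by exists y.
have : (size P <= size [:: (1%:M : 'M[rat]_N)])%N.
  apply: uniq_leq_size Pu _ => y yP; rewrite mem_seq1; have := H y yP; by rewrite negbK.
by rewrite Ps /= leqNgt k1.
Qed.

Definition cent0 {N} (S : 'M[rat]_N -> Prop) (P : seq 'M[rat]_N) (c : 'M[rat]_N) :=
  S c /\ forall y, y \in P -> c *m y = y *m c.
Definition norm0 {N} (S : 'M[rat]_N -> Prop) (P : seq 'M[rat]_N) (g : 'M[rat]_N) :=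
  S g /\ forall y, (y \in P) = (g *m y *m invmx g \in P).

Definition Concl {N} (n : int) (xi : algC) (S : 'M[rat]_N -> Prop) (P : seq 'M[rat]_N) :=
  (exists (phi0 : 'M[rat]_N -> algC) (psi0 : 'M[rat]_N -> {rmorphism algC -> algC}),
     (forall c, cent0 S P c -> unit_in (Zinv_adj n xi) (phi0 c)) /\
     (forall c d, cent0 S P c -> cent0 S P d -> phi0 (c *m d) = phi0 c * phi0 d) /\
     (forall c d, cent0 S P c -> cent0 S P d -> phi0 c = phi0 d -> c = d) /\
     (forall g h y, norm0 S P g -> norm0 S P h -> Zinv_adj n xi y ->
        psi0 (g *m h) y = psi0 g (psi0 h y)) /\
     (forall g, norm0 S P g -> (forall y, Zinv_adj n xi y -> psi0 g y = y) <-> cent0 S P g) /\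
     (forall g c, norm0 S P g -> cent0 S P c -> phi0 (g *m c *m invmx g) = psi0 g (phi0 c)))
  /\ (forall g, norm0 S P g -> (forall c, cent0 S P c -> g *m c *m invmx g = c) -> cent0 S P g).

Lemma core2 (p : nat) (n : int) (xi : algC) (N : nat) (S : 'M[rat]_N -> Prop)
    (P : seq 'M[rat]_N) :
  N.+1 = p -> prime p -> (p%:Z %| n)%Z -> p.-primitive_root xi ->
  (forall y, S y -> y \in unitmx) -> (forall y, S y -> S (invmx y)) ->
  (forall y, S y -> mxZinv n y) ->
  uniq P -> size P = p -> (forall y, y \in P -> S y) -> 1%:M \in P ->
  (forall y z, y \in P -> z \in P -> y *m z \in P) ->
  Concl n xi S P.
Proof.
move=> hN; subst p; case: N S P => [|m] S P pp pn xip S1 S2 S3 Pu Ps PS P1 Pm.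
  by [].
have [x xP x1] := exists_x Pu Ps (isT : (1 < m.+2)%N).
exact (@core_concl m pp n pn xi xip S S1 S2 S3 P Pu Ps PS P1 Pm x xP x1).
Qed.

Theorem theorem4p3 (p : nat) (n : int) (xi : algC)
    (P : seq 'M[rat]_(hdim p + hdim p)) :
  prime p -> odd p -> n != 0 -> (p%:Z %| n)%Z ->
  p.-primitive_root xi ->
  is_PID (Zinv_adj n xi) -> is_PID (Zinv_adj n (xi + xi^-1)) ->
  subgroup_of_order n P p ->
  (exists (phi : 'M[rat]_(hdim p + hdim p) -> algC)
          (psi : 'M[rat]_(hdim p + hdim p) -> {rmorphism algC -> algC}),
     (* phi : C(P) -> Z[1/n][xi]^* is an injective group homomorphism *)
     (forall c, centralizer n P c -> unit_in (Zinv_adj n xi) (phi c)) /\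
         (forall c d, centralizer n P c -> centralizer n P d ->
            phi (c *m d) = phi c * phi d) /\
         (forall c d, centralizer n P c -> centralizer n P d ->
            phi c = phi d -> c = d) /\
     (* psi : N(P) -> Gal(Q(xi)/Q) is a homomorphism with kernel C(P),
        an element of Gal(Q(xi)/Q) being the restriction to Q(xi) of a
        ring endomorphism of algC (equality = agreement on Z[1/n][xi]) *)
         (forall g h x, normalizer n P g -> normalizer n P h ->
            Zinv_adj n xi x -> psi (g *m h) x = psi g (psi h x)) /\
         (forall g, normalizer n P g ->
            (forall x, Zinv_adj n xi x -> psi g x = x) <-> centralizer n P g) /\
     (* the conjugation action corresponds to the Galois action *)
         (forall g c, normalizer n P g -> centralizer n P c ->
            phi (g *m c *m invmx g) = psi g (phi c)))
  /\
  (* faithfulness of N(P)/C(P) on C(P) *)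
  (forall g, normalizer n P g ->
     (forall c, centralizer n P c -> g *m c *m invmx g = c) ->
     centralizer n P g).
Proof.
move=> pp podd _ pn xip _ _ [Pu [Ps [PS [P1 [Pm _]]]]].
have hN : (hdim p + hdim p).+1 = p.
  have := odd_double_half p; rewrite podd /hdim => <-.
  by rewrite add1n /= doubleK addnn.
have S1 : forall y : 'M[rat]_(hdim p + hdim p), in_Sp n y -> y \in unitmx by move=> y; exact: Sp_unit.
have S2 : forall y : 'M[rat]_(hdim p + hdim p), in_Sp n y -> in_Sp n (invmx y) by move=> y; exact: Sp_inv.
have S3 : forall y : 'M[rat]_(hdim p + hdim p), in_Sp n y -> mxZinv n y by move=> y [].
exact (@core2 p n xi _ (@in_Sp (hdim p) n) P hN pp pn xip S1 S2 S3 Pu Ps PS P1 Pm).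
Qed.
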